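(* If $\mathsf H$ is a variety of infinitary clone $\tau$-algebras, then $\mathsf H^{\nabla}$ is a variety of $\tau$-algebras.
   Context: $\tau$ is a set of $\omega$-ary operation symbols disjoint from $\{q\}\cup\{e_i:i\in\omega\}$; a $\tau$-algebra is $\mathbf A=(A,f^{\mathbf A})_{f\in\tau}$ with $f^{\mathbf A}:A^\omega\to A$. A variety is a class closed under isomorphic copies, homomorphic images, subalgebras and arbitrary direct products. $\bar\tau$ is the type with nullary $e_i$ ($i\in\omega$), nullary $f$ for each $f\in\tau$, and $\omega$-ary $q$. An infinitary clone $\tau$-algebra is a $\bar\tau$-algebra satisfying (N1) $q(e_i,x_0,x_1,\dots)=x_i$; (N2) $q(x,e_0,e_1,\dots)=x$; (N3) $q(q(x,y_0,y_1,\dots),\boldsymbol z)=q(x,q(y_0,\boldsymbol z),q(y_1,\boldsymbol z),\dots)$ with $\boldsymbol z=(z_0,z_1,\dots)$. For a $\tau$-algebra $\mathbf A$, $\mathcal O^{(\omega)}_{\mathbf A}$ is the infinitary clone $\tau$-algebra of all functions $A^\omega\to A$ with $e_i(s)=s_i$, $q(g_0,g_1,\dots)(s)=g_0(g_1(s),g_2(s),\dots)$, constant $f$ interpreted as $f^{\mathbf A}$; $\mathsf{FCA}(\mathbf A)$ is the class of its subalgebras. For a class $\mathsf H$ of infinitary clone $\tau$-algebras, $\mathsf H^{\nabla}$ is the class of $\tau$-algebras isomorphic to some $\mathbf A$ such that $\mathsf{FCA}(\mathbf A)\cap\mathsf H\neq\emptyset$. *)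

(* Defs.v *)
Record signature := Signature { sym : Type; ar : sym -> Type }.

Record algebra (S : signature) := Algebra {
  car : Type;
  op : forall o : sym S, (ar S o -> car) -> car }.
Arguments car {S} _.
Arguments op {S} _ _ _.

Definition is_hom {S : signature} (A B : algebra S) (h : car A -> car B) : Prop :=
  forall (o : sym S) (x : ar S o -> car A), h (op A o x) = op B o (fun i => h (x i)).

Definition injective {X Y : Type} (f : X -> Y) : Prop := forall a b, f a = f b -> a = b.
Definition surjective {X Y : Type} (f : X -> Y) : Prop := forall y, exists x, f x = y.

Definition subuniverse {S : signature} (A : algebra S) (P : car A -> Prop) : Prop :=
  forall (o : sym S) (x : ar S o -> car A), (forall i, P (x i)) -> P (op A o x).

Definition subalg {S : signature} (A : algebra S) (P : car A -> Prop)
  (hP : subuniverse A P) : algebra S :=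
  {| car := { a : car A | P a };
     op := fun o x => exist P (op A o (fun i => proj1_sig (x i)))
                            (hP o _ (fun i => proj2_sig (x i))) |}.

Definition prodalg {S : signature} {I : Type} (F : I -> algebra S) : algebra S :=
  {| car := forall i : I, car (F i);
     op := fun o x => fun i => op (F i) o (fun j => x j i) |}.

Definition closed_I {S : signature} (K : algebra S -> Prop) : Prop :=
  forall (A B : algebra S) (h : car A -> car B),
    is_hom A B h -> injective h -> surjective h -> K A -> K B.
Definition closed_H {S : signature} (K : algebra S -> Prop) : Prop :=
  forall (A B : algebra S) (h : car A -> car B),
    is_hom A B h -> surjective h -> K A -> K B.
Definition closed_S {S : signature} (K : algebra S -> Prop) : Prop :=
  forall (A : algebra S) (P : car A -> Prop) (hP : subuniverse A P),
    K A -> K (subalg A P hP).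
Definition closed_P {S : signature} (K : algebra S -> Prop) : Prop :=
  forall (I : Type) (F : I -> algebra S), (forall i, K (F i)) -> K (prodalg F).
Definition variety {S : signature} (K : algebra S -> Prop) : Prop :=
  closed_I K /\ closed_H K /\ closed_S K /\ closed_P K.

Definition tau_sig (tau : Type) : signature := {| sym := tau; ar := fun _ => nat |}.

Inductive tbar_sym (tau : Type) : Type :=
| Sym_e (i : nat)
| Sym_f (f : tau)
| Sym_q.
Arguments Sym_e {tau} i.
Arguments Sym_f {tau} f.
Arguments Sym_q {tau}.

Definition tbar_ar {tau : Type} (o : tbar_sym tau) : Type :=
  match o with
  | Sym_e _ => Empty_set
  | Sym_f _ => Empty_set
  | Sym_q => nat
  end.

Definition tbar_sig (tau : Type) : signature := {| sym := tbar_sym tau; ar := @tbar_ar tau |}.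

Definition no_args {X : Type} : Empty_set -> X := fun v => match v with end.

(** Derived notations inside a tau-bar algebra. The omega-ary q is applied to a
    sequence s with s 0 = x, s (n+1) = y_n, i.e. q(x, y_0, y_1, ...). *)
Definition ce {tau} (C : algebra (tbar_sig tau)) (i : nat) : car C := op C (Sym_e i) no_args.
Definition cq {tau} (C : algebra (tbar_sig tau)) (s : nat -> car C) : car C := op C Sym_q s.

Definition scons {X : Type} (x : X) (s : nat -> X) : nat -> X :=
  fun n => match n with 0 => x | S m => s m end.

Definition clone_alg {tau} (C : algebra (tbar_sig tau)) : Prop :=
  (forall (x : nat -> car C) (i : nat), cq C (scons (ce C i) x) = x i) /\
  (forall x : car C, cq C (scons x (ce C)) = x) /\
  (forall (x : car C) (y z : nat -> car C),
      cq C (scons (cq C (scons x y)) z) =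
      cq C (scons x (fun n => cq C (scons (y n) z)))).

Definition O_op {tau} (A : algebra (tau_sig tau)) (o : tbar_sym tau) :
  (tbar_ar o -> ((nat -> car A) -> car A)) -> ((nat -> car A) -> car A) :=
  match o as o0 return (tbar_ar o0 -> ((nat -> car A) -> car A)) -> ((nat -> car A) -> car A) with
  | Sym_e i => fun _ s => s i
  | Sym_f f => fun _ => op A f
  | Sym_q => fun g s => g 0 (fun n => g (S n) s)
  end.

Definition O_alg {tau} (A : algebra (tau_sig tau)) : algebra (tbar_sig tau) :=
  @Algebra (tbar_sig tau) ((nat -> car A) -> car A) (O_op A).

(** FCA(A): the subalgebras of O^(omega)_A; membership of a class H. *)
Definition FCA_meets {tau} (A : algebra (tau_sig tau)) (H : algebra (tbar_sig tau) -> Prop) : Prop :=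
  exists (P : car (O_alg A) -> Prop) (hP : subuniverse (O_alg A) P), H (subalg (O_alg A) P hP).

Definition nabla {tau} (H : algebra (tbar_sig tau) -> Prop) : algebra (tau_sig tau) -> Prop :=
  fun B => exists (A : algebra (tau_sig tau)) (h : car A -> car B),
      is_hom A B h /\ injective h /\ surjective h /\ FCA_meets A H.

(* Main.v *)
Require Import Defs.
From Stdlib Require Import FunctionalExtensionality ProofIrrelevance IndefiniteDescription.

Lemma sig_eq' {A : Type} (P : A -> Prop) (x y : sig P) :
  proj1_sig x = proj1_sig y -> x = y.
Proof.
  destruct x as [x px], y as [y py]; simpl; intros ->.
  f_equal; apply proof_irrelevance.
Qed.

Section L.
Variable tau : Type.
Variable H : algebra (tbar_sig tau) -> Prop.

Lemma image_lemma (HH : closed_H H) (D : algebra (tbar_sig tau)) (A : algebra (tau_sig tau))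
  (phi : car D -> car (O_alg A)) : is_hom D (O_alg A) phi -> H D -> FCA_meets A H.
Proof.
  intros hom HD.
  set (P := fun f : car (O_alg A) => exists d, phi d = f).
  assert (hP : subuniverse (O_alg A) P).
  { intros o x hx.
    set (ds := fun i => proj1_sig (constructive_indefinite_description _ (hx i))).
    exists (op D o ds). rewrite hom. f_equal. apply functional_extensionality; intro i.
    unfold ds. destruct (constructive_indefinite_description _ (hx i)); simpl; auto. }
  exists P, hP.
  apply (HH D (subalg (O_alg A) P hP) (fun d => exist P (phi d) (ex_intro _ d eq_refl))).
  - intros o x. apply sig_eq'. simpl. apply hom.
  - intros [f [d e]]. exists d. apply sig_eq'. simpl. auto.
  - exact HD.
Qed.

Lemma H_lemma (HH : closed_H H) (HS : closed_S H) (A : algebra (tau_sig tau))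
  (B : algebra (tau_sig tau)) (k : car A -> car B) :
  is_hom A B k -> surjective k -> FCA_meets A H -> FCA_meets B H.
Proof.
  intros hk sk [P [hP HC]].
  set (C := subalg (O_alg A) P hP) in *.
  set (Q := fun c : car C => forall s t : nat -> car A, (forall n, k (s n) = k (t n)) ->
              k (proj1_sig c s) = k (proj1_sig c t)).
  assert (hQ : subuniverse C Q).
  { intros o x hx. destruct o as [i|f|]; simpl.
    - intros s t e. apply e.
    - intros s t e. simpl. rewrite !(hk f). f_equal. apply functional_extensionality; intro n; apply e.
    - intros s t e. apply (hx 0%nat). intro n. apply (hx (S n)). exact e. }
  set (sec := fun b => proj1_sig (constructive_indefinite_description _ (sk b))).
  assert (hsec : forall b, k (sec b) = b).
  { intro b. unfold sec. destruct (constructive_indefinite_description _ (sk b)); auto. }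
  apply (image_lemma HH (subalg C Q hQ) B
     (fun d s' => k (proj1_sig (proj1_sig d) (fun n => sec (s' n))))).
  - intros o x. apply functional_extensionality; intro s'.
    destruct o as [i|f|]; simpl.
    + apply hsec.
    + rewrite hk. f_equal. apply functional_extensionality; intro n; apply hsec.
    + apply (proj2_sig (x 0%nat)). intro n. rewrite hsec. reflexivity.
  - apply HS. exact HC.
Qed.

Lemma S_lemma (HH : closed_H H) (HS : closed_S H) (A : algebra (tau_sig tau))
  (B : algebra (tau_sig tau)) (j : car B -> car A) :
  is_hom B A j -> injective j -> FCA_meets A H -> FCA_meets B H.
Proof.
  intros hj ij [P [hP HC]].
  set (C := subalg (O_alg A) P hP) in *.
  set (Q := fun c : car C => forall s : nat -> car B,
              exists b, j b = proj1_sig c (fun n => j (s n))).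
  assert (hQ : subuniverse C Q).
  { intros o x hx. destruct o as [i|f|]; simpl.
    - intros s. exists (s i). reflexivity.
    - intros s. exists (op B f s). apply hj.
    - intros s.
      set (bs := fun n => proj1_sig (constructive_indefinite_description _ (hx (S n) s))).
      assert (hb : forall n, j (bs n) = proj1_sig (x (S n)) (fun m => j (s m))).
      { intro n. unfold bs. destruct (constructive_indefinite_description _ (hx (S n) s)); auto. }
      destruct (hx 0%nat bs) as [b eb]. exists b. rewrite eb. simpl. f_equal.
      apply functional_extensionality; intro n; apply hb. }
  set (phi := fun (d : car (subalg C Q hQ)) s =>
     proj1_sig (constructive_indefinite_description _ (proj2_sig d s))).
  assert (hphi : forall d s, j (phi d s) = proj1_sig (proj1_sig d) (fun n => j (s n))).
  { intros d s. unfold phi.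
    destruct (constructive_indefinite_description _ (proj2_sig d s)); auto. }
  apply (image_lemma HH (subalg C Q hQ) B phi).
  - intros o x. apply functional_extensionality; intro s. apply ij.
    rewrite hphi. destruct o as [i|f|]; simpl.
    + reflexivity.
    + rewrite hj. reflexivity.
    + rewrite hphi. f_equal. apply functional_extensionality; intro n.
      rewrite hphi. reflexivity.
  - apply HS. exact HC.
Qed.

Lemma P_lemma (HH : closed_H H) (HP : closed_P H) (I : Type) (G : I -> algebra (tau_sig tau)) :
  (forall i, FCA_meets (G i) H) -> FCA_meets (prodalg G) H.
Proof.
  intros hG.
  set (s1 := fun i => constructive_indefinite_description _ (hG i)).
  set (Pi := fun i => proj1_sig (s1 i)).
  set (s2 := fun i => constructive_indefinite_description _ (proj2_sig (s1 i))).
  set (hPi := fun i => proj1_sig (s2 i)).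
  set (Ci := fun i => subalg (O_alg (G i)) (Pi i) (hPi i)).
  assert (HCi : forall i, H (Ci i)) by (intro i; exact (proj2_sig (s2 i))).
  apply (image_lemma HH (prodalg Ci) (prodalg G)
    (fun c s => fun i => proj1_sig (c i) (fun n => s n i))).
  - intros o x. apply functional_extensionality; intro s.
    destruct o as [k|f|]; simpl; reflexivity.
  - apply HP. exact HCi.
Qed.

Lemma nabla_self (B : algebra (tau_sig tau)) : FCA_meets B H -> nabla H B.
Proof.
  intro h. exists B, (fun x => x). repeat split; auto.
  intros a b e; exact e. intro y; exists y; reflexivity.
Qed.

End L.

Theorem theorem5p4 (tau : Type) (H : algebra (tbar_sig tau) -> Prop) :
  (forall C, H C -> clone_alg C) -> variety H -> variety (nabla H).
Proof.
  intros _ [HI [HH [HS HP]]]. repeat split.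
  - intros B B' g hg ig sg [A [h0 [hh [ih [sh HA]]]]].
    exists A, (fun a => g (h0 a)). repeat split.
    + intros o x. rewrite hh, hg. reflexivity.
    + intros a b e. apply ih, ig, e.
    + intro y. destruct (sg y) as [b <-]. destruct (sh b) as [a <-]. exists a; reflexivity.
    + exact HA.
  - intros B B' g hg sg [A [h0 [hh [ih [sh HA]]]]].
    apply nabla_self. apply (H_lemma tau H HH HS A B' (fun a => g (h0 a))).
    + intros o x. rewrite hh, hg. reflexivity.
    + intro y. destruct (sg y) as [b <-]. destruct (sh b) as [a <-]. exists a; reflexivity.
    + exact HA.
  - intros B P hP [A [h0 [hh [ih [sh HA]]]]].
    apply nabla_self.
    set (j := fun b : car (subalg B P hP) =>
      proj1_sig (constructive_indefinite_description _ (sh (proj1_sig b)))).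
    assert (hj : forall b, h0 (j b) = proj1_sig b).
    { intro b. unfold j. destruct (constructive_indefinite_description _ (sh (proj1_sig b))); auto. }
    apply (S_lemma tau H HH HS A _ j).
    + intros o x. apply ih. rewrite hh, hj. simpl. f_equal.
      apply functional_extensionality; intro i. rewrite hj. reflexivity.
    + intros a b e. apply sig_eq'. rewrite <- !hj, e. reflexivity.
    + exact HA.
  - intros I F hF.
    set (s1 := fun i => constructive_indefinite_description _ (hF i)).
    set (G := fun i => proj1_sig (s1 i)).
    set (s2 := fun i => constructive_indefinite_description _ (proj2_sig (s1 i))).
    set (hi := fun i => proj1_sig (s2 i)).
    assert (spec : forall i, is_hom (G i) (F i) (hi i) /\ injective (hi i) /\
                     surjective (hi i) /\ FCA_meets (G i) H) by (intro i; exact (proj2_sig (s2 i))).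
    exists (prodalg G), (fun x i => hi i (x i)). repeat split.
    + intros o x. apply functional_extensionality_dep; intro i. simpl.
      apply (proj1 (spec i)).
    + intros a b e. apply functional_extensionality_dep; intro i.
      apply (proj1 (proj2 (spec i))). exact (f_equal (fun f => f i) e).
    + intro y.
      exists (fun i => proj1_sig (constructive_indefinite_description _
                  (proj1 (proj2 (proj2 (spec i))) (y i)))).
      apply functional_extensionality_dep; intro i.
      destruct (constructive_indefinite_description _ (proj1 (proj2 (proj2 (spec i))) (y i))); auto.
    + apply (P_lemma tau H HH HP). intro i. apply (proj2 (proj2 (proj2 (spec i)))).
Qed.
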